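(* Let $f_n(x)=\kappa_nx^{a_n}$ with $\kappa_n>0$ and $0<a_n<1$, and fix $B_n>0$. Then the function $p\mapsto\varphi_n(p,B_n)$ on $[p_n^{\min}(B_n),\infty)$ attains its maximum at $$p=\max\Big\{p_n^{\min}(B_n),\ \Big[\exp\Big(a_n+\tfrac{r_{n,e}\ln2}{B_n}+W\big((\tfrac{a_ng_np_n^{cir}}{\sigma_n^2B_n}-a_n)e^{-a_n-\frac{r_{n,e}\ln2}{B_n}}\big)\Big)-1\Big]\frac{\sigma_n^2B_n}{g_n}\Big\}.$$
   Context: Constants $g_n>0$, $\sigma_n^2>0$, $p_n^{cir}>0$, $r_{n,e}\ge0$, $r_n^{\min}>0$, $r_n^{\min}\ge r_{n,e}$. $r_n(p,B)=B\log_2(1+\frac{g_np}{\sigma_n^2B})$; $\varphi_n(p,B)=\frac{f_n(r_n(p,B)-r_{n,e})}{p+p_n^{cir}}$. $p_n^{\min}(B)=\frac{(2^{r_n^{\min}/B}-1)\sigma_n^2B}{g_n}$. $W$ is the principal branch of the Lambert $W$ function ($W(z)$, $z\ge-1/e$, is the solution $x\ge-1$ of $xe^x=z$). *)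

(* Defs.v *)
From HB Require Import structures.
From mathcomp Require Import all_boot all_order all_algebra.
From mathcomp Require Import classical_sets reals exp sequences.
Set Implicit Arguments. Unset Strict Implicit. Unset Printing Implicit Defensive.
Import Order.TTheory GRing.Theory Num.Theory.
Local Open Scope ring_scope.
Local Open Scope classical_set_scope.

Section Defs.
Variable R : realType.

Definition log2 (x : R) : R := ln x / ln 2.

Definition rate (g sigma2 p B : R) : R := B * log2 (1 + g * p / (sigma2 * B)).

Definition fpow (kappa a x : R) : R := kappa * x `^ a.

Definition phi (kappa a g sigma2 pcir re p B : R) : R :=
  fpow kappa a (rate g sigma2 p B - re) / (p + pcir).

Definition pmin (g sigma2 rmin B : R) : R :=
  (2 `^ (rmin / B) - 1) * sigma2 * B / g.

(* Principal branch of Lambert W: for z >= -1/e, the unique x >= -1 with x e^x = z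
   (value unspecified, 0, outside the domain). *)
Definition LambertW (z : R) : R := xget 0 [set x | -1 <= x /\ x * expR x = z].

End Defs.

(* Main.v *)
Require Import Defs.
From HB Require Import structures.
From mathcomp Require Import all_boot all_order all_algebra.
From mathcomp Require Import all_classical all_reals all_analysis.
From mathcomp Require Import ring lra.
Import Order.TTheory GRing.Theory Num.Theory.
Import numFieldNormedType.Exports.
Local Open Scope ring_scope.
Local Open Scope classical_set_scope.

Lemma lw_spec (R : realType) (z : R) : - expR (-1) <= z ->
  -1 <= LambertW z /\ LambertW z * expR (LambertW z) = z.
Proof.
move=> hz.
have := @xgetPex R 0 [set x | -1 <= x /\ x * expR x = z]; apply.
have h1 : (-1 : R) <= `|z| by apply: le_trans (normr_ge0 z); lra.
have hmm : Num.min ((-1) * expR (-1)) (`|z| * expR `|z|) <= z <= Num.max ((-1) * expR (-1)) (`|z| * expR `|z|).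
  apply/andP; split.
    rewrite ge_min; apply/orP; left; lra.
  rewrite le_max; apply/orP; right.
  have e1 : 1 <= expR `|z| by rewrite -expR0 ler_expR.
  have := ler_norm z; have := normr_ge0 z; nra.
have [c c12 fc] := @IVT R (fun x => x * expR x) (-1) `|z| z h1
  (continuous_subspaceT (fun x => continuousM (@cvg_id _ _) (@continuous_expR R x)))
  hmm.
by exists c; split => //; move: c12; rewrite in_itv /= => /andP[].
Qed.

Lemma bern {R : realType} (a t : R) : 0 < a -> a < 1 -> 0 <= t ->
  t `^ a <= a * t + 1 - a.
Proof.
move=> a0 a1; rewrite le_eqVlt => /orP[/eqP<-|t0].
  rewrite powR0 ?gt_eqF //; lra.
rewrite /powR gt_eqF //.
have tE : t = expR (ln t) by rewrite lnK // posrE.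
set y := ln t in tE *.
rewrite [in a * t]tE.
have e1 := expR_ge1Dx ((1 - a) * y).
have e2 := expR_ge1Dx (- (a * y)).
have E1 : expR y = expR (a * y) * expR ((1 - a) * y) by rewrite -expRD; congr expR; ring.
have E2 : 1 = expR (a * y) * expR (- (a * y)) by rewrite -expRD addrN expR0.
have p := expR_gt0 (a * y).
rewrite E1.
have : a * (expR (a * y) * expR ((1 - a) * y)) >= a * (expR (a*y) * (1 + (1 - a) * y)).
  by rewrite ler_pM2l // ler_pM2l.
have : (1 - a) * (expR (a * y) * expR (- (a * y))) >= (1 - a) * (expR (a*y) * (1 - a * y)).
  by rewrite ler_pM2l ?subr_gt0 // ler_pM2l.
rewrite -E2. nra.
Qed.

Lemma core (R : realType) (a k c u0 u : R) : 0 < a -> a < 1 -> 0 < u0 -> 0 <= u ->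
  0 < expR (c + u0) + k -> 0 < expR (c + u) + k ->
  (u - u0) * (a * (expR (c + u0) + k) - u0 * expR (c + u0)) <= 0 ->
  u `^ a / (expR (c + u) + k) <= u0 `^ a / (expR (c + u0) + k).
Proof.
move=> a0 a1 u00 u0' hX0 hX H.
set X0 := expR (c + u0) in hX0 H *.
set X := expR (c + u) in hX *.
have XE : X = X0 * expR (u - u0) by rewrite /X /X0 -expRD; congr expR; ring.
have eX := expR_ge1Dx (u - u0).
have X0p : 0 < X0 by apply: expR_gt0.
have hX' : X >= X0 * (1 + (u - u0)) by rewrite XE ler_pM2l.
set m := u / u0.
have uE : u = u0 * m by rewrite /m mulrC divfK // gt_eqF.
have m0 : 0 <= m by rewrite /m divr_ge0 // ltW.
have hb := bern a m a0 a1 m0.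
have uaE : u `^ a = u0 `^ a * m `^ a by rewrite uE powRM // ltW.
rewrite ler_pdivrMr // mulrAC ler_pdivlMr // uaE -mulrA ler_pM2l ?powR_gt0 //.
have pm := powR_ge0 m a.
have key : (a * m + 1 - a) * (X0 + k) <= X + k.
  rewrite -(ler_pM2l u00).
  rewrite uE in H hX'. nra.
apply: le_trans key.
by rewrite ler_pM2r.
Qed.
Lemma phi_repr (R : realType) (g sigma2 pcir re kappa a B c k u : R) :
  0 < g -> 0 < sigma2 -> 0 < B -> 0 <= u ->
  c = re * ln 2 / B -> k = g * pcir / (sigma2 * B) - 1 ->
  phi kappa a g sigma2 pcir re ((expR (c + u) - 1) * sigma2 * B / g) B =
  (kappa * (B / ln 2) `^ a * (g / (sigma2 * B))) * (u `^ a / (expR (c + u) + k)).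
Proof.
move=> g0 s0 B0 u0 hc hk.
have l2 : 0 < ln (2:R) by apply: ln_gt0; lra.
have X0 := expR_gt0 (c + u).
rewrite /phi /fpow /rate /log2.
have -> : 1 + g * ((expR (c + u) - 1) * sigma2 * B / g) / (sigma2 * B) = expR (c + u).
  by field; rewrite ?gt_eqF ?mulr_gt0.
rewrite expRK.
have -> : B * ((c + u) / ln 2) - re = (B / ln 2) * u.
  by rewrite hc; field; rewrite ?gt_eqF.
rewrite (powRM _ (divr_ge0 (ltW B0) (ltW l2)) u0).
have -> : (expR (c + u) - 1) * sigma2 * B / g + pcir = (sigma2 * B / g) * (expR (c + u) + k).
  by rewrite hk; field; rewrite ?gt_eqF ?mulr_gt0.
rewrite invfM mulrA. 
have -> : (sigma2 * B / g)^-1 = g / (sigma2 * B) by rewrite invf_div.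
rewrite /=.
ring.
Qed.

Theorem lemma13 (R : realType) (g sigma2 pcir re rmin kappa a B : R)
  (hg : 0 < g) (hsigma2 : 0 < sigma2) (hpcir : 0 < pcir) (hre : 0 <= re)
  (hrmin : 0 < rmin) (hrmin_re : re <= rmin)
  (hkappa : 0 < kappa) (ha0 : 0 < a) (ha1 : a < 1) (hB : 0 < B) :
  let pstar :=
    Num.max (pmin g sigma2 rmin B)
      ((expR (a + re * ln 2 / B
               + LambertW ((a * g * pcir / (sigma2 * B) - a)
                           * expR (- a - re * ln 2 / B))) - 1)
       * sigma2 * B / g) in
  pmin g sigma2 rmin B <= pstar /\
  forall p : R, pmin g sigma2 rmin B <= p ->
    phi kappa a g sigma2 pcir re p B <= phi kappa a g sigma2 pcir re pstar B.
Proof.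
move=> pstar; split; first by rewrite /pstar le_max lexx.
have l2 : 0 < ln (2:R) by apply: ln_gt0; lra.
set c := re * ln 2 / B.
set d := g * pcir / (sigma2 * B).
set k := d - 1.
have c0 : 0 <= c by rewrite /c divr_ge0 ?mulr_ge0 // ltW.
have d0 : 0 < d by rewrite /d; apply: divr_gt0; apply: mulr_gt0.
set z := (a * g * pcir / (sigma2 * B) - a) * expR (- a - c).
have zE : z = a * k * expR (- a - c).
  by rewrite /z /k /d; congr (_ * _); field; rewrite !gt_eqF.
have ec : expR (- a - c) <= expR (- a) by rewrite ler_expR; lra.
have ecp := expR_gt0 (- a - c).
have zlow : - a * expR (- a - c) < z.
  rewrite zE /k; have : 0 < a * d * expR (- a - c) by apply: mulr_gt0; [apply: mulr_gt0|].
  lra.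
have ea1 := expR_ge1Dx (a - 1).
have eE : expR (-1) = expR (a - 1) * expR (- a) by rewrite -expRD; congr expR; ring.
have eap := expR_gt0 (- a).
have hz : - expR (-1) <= z.
  have : a * expR (- a) <= expR (a - 1) * expR (- a) by rewrite ler_pM2r //; lra.
  nra.
have [w1 wE] := @lw_spec R z hz.
set w := LambertW z in w1 wE.
set us := a + w.
have us0 : 0 < us.
  rewrite /us; apply/negPn/negP; rewrite -leNgt => hw.
  set t := - a - w.
  have t0 : 0 <= t by rewrite /t; lra.
  have t1 : t <= 1 - a by rewrite /t; lra.
  have et := expR_ge1Dx (- t).
  have ewE : expR w = expR (- a) * expR (- t) by rewrite -expRD; congr expR; rewrite /t; ring.
  have : w * expR w <= - a * expR (- a).
    rewrite ewE.
    have wt : w = - a - t by rewrite /t; ring.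
    rewrite wt.
    have : (a + t) * (1 - t) >= a by nra.
    have : (a + t) * expR (- t) >= (a + t) * (1 - t) by rewrite ler_pM2l //; lra.
    nra.
  have : - a * expR (- a - c) >= - a * expR (- a) by nra.
  lra.
set xs := expR (c + us).
have xsp : 0 < xs by apply: expR_gt0.
have stat : w * xs = a * k.
  have : w * expR w * expR (a + c) = a * k * expR (- a - c) * expR (a + c) by rewrite wE zE.
  rewrite -!mulrA -!expRD.
  have -> : - a - c + (a + c) = 0 by ring.
  rewrite expR0 mulr1 /xs /us => <-; congr (_ * expR _); ring.
set umin := (rmin - re) * ln 2 / B.
have umin0 : 0 <= umin by rewrite /umin divr_ge0 ?mulr_ge0 ?subr_ge0 // ltW.
set xmin := expR (c + umin).
have pminE : pmin g sigma2 rmin B = (xmin - 1) * sigma2 * B / g.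
  rewrite /pmin /powR gt_eqF; last by lra.
  by rewrite /xmin /c /umin; congr ((expR _ - 1) * _ * _ / _); field; rewrite gt_eqF.
have psE : (expR (a + re * ln 2 / B + w) - 1) * sigma2 * B / g = (xs - 1) * sigma2 * B / g.
  by rewrite /xs /us /c; congr ((expR _ - 1) * _ * _ / _); ring.
have Xk : forall u, 0 <= u -> 0 < expR (c + u) + k.
  move=> u u0; have : 1 <= expR (c + u) by rewrite -expR0 ler_expR; lra.
  rewrite /k; lra.
set K := kappa * (B / ln 2) `^ a * (g / (sigma2 * B)).
have K0 : 0 <= K by apply: mulr_ge0; [apply: mulr_ge0; [lra | exact: powR_ge0] | apply: divr_ge0; [lra | apply: mulr_ge0; lra]].
have hrepr := fun u (hu : 0 <= u) => @phi_repr R g sigma2 pcir re kappa a B c k u hg hsigma2 hB hu erefl erefl.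
move=> p hp.
set x := 1 + g * p / (sigma2 * B).
have xge : xmin <= x.
  rewrite pminE in hp; rewrite /x.
  have : (xmin - 1) * sigma2 * B / g * (g / (sigma2 * B)) <= p * (g / (sigma2 * B)).
    by rewrite ler_pM2r ?divr_gt0 ?mulr_gt0.
  have -> : (xmin - 1) * sigma2 * B / g * (g / (sigma2 * B)) = xmin - 1.
    by field; rewrite ?gt_eqF ?mulr_gt0.
  have -> : p * (g / (sigma2 * B)) = g * p / (sigma2 * B) by rewrite mulrA (mulrC p).
  lra.
have xp : 0 < x by apply: lt_le_trans xge; apply: expR_gt0.
set u := ln x - c.
have xE : expR (c + u) = x by rewrite /u addrC subrK lnK // posrE.
have pE : p = (expR (c + u) - 1) * sigma2 * B / g.
  by rewrite xE /x; field; rewrite ?gt_eqF ?mulr_gt0.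
have uge : umin <= u.
  have : expR (c + umin) <= expR (c + u) by rewrite xE.
  by rewrite ler_expR lerD2l.
have u0 : 0 <= u by apply: le_trans uge.
rewrite pE (hrepr u u0).
have [hle | hlt] := leP us umin.
- have -> : pstar = (expR (c + umin) - 1) * sigma2 * B / g.
    rewrite /pstar psE -pminE max_l // pminE.
    have : xs <= xmin by rewrite /xs /xmin ler_expR lerD2l.
    move=> h; rewrite ler_pM2r ?invr_gt0 // ler_pM2r // ler_pM2r //; lra.
  rewrite (hrepr umin umin0) ler_wpM2l //.
  apply: core => //; first by apply: lt_le_trans hle.
  + exact: Xk.
  + exact: Xk.
  set s := umin - us.
  have s0 : 0 <= s by rewrite /s subr_ge0.
  have xmE : expR (c + umin) = xs * expR s by rewrite /xs -expRD; congr expR; rewrite /s; ring.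
  have es1 : 1 <= expR s by rewrite -expR0 ler_expR.
  have esE : expR s * expR (- s) = 1 by rewrite -expRD addrN expR0.
  have ens := expR_ge1Dx (- s).
  have es2 : expR s * (1 - s) <= 1.
    rewrite -esE; rewrite ler_pM2l ?expR_gt0 //; lra.
  have inner : a * (expR (c + umin) + k) - umin * expR (c + umin) <= 0.
    rewrite xmE.
    have umE : umin = a + w + s by rewrite /s /us; ring.
    rewrite umE.
    have akE : a * k = w * xs by rewrite stat.
    have : a * (xs * expR s + k) - (a + w + s) * (xs * expR s) = xs * (w - w * expR s - s * expR s).
      by rewrite mulrDr akE; ring.
    move=> ->.
    have : w - w * expR s - s * expR s <= 0.
      have : 0 <= (w + 1) * (expR s - 1) by apply: mulr_ge0; lra.
      nra.
    move=> h; rewrite pmulr_rle0 //.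
  have : 0 <= u - umin by rewrite subr_ge0.
  move=> h; exact: mulr_ge0_le0.
- have -> : pstar = (expR (c + us) - 1) * sigma2 * B / g.
    rewrite /pstar psE max_r // pminE.
    have : xmin <= xs by rewrite /xs /xmin ler_expR lerD2l ltW.
    move=> h; rewrite ler_pM2r ?invr_gt0 // ler_pM2r // ler_pM2r //; lra.
  rewrite (hrepr us (ltW us0)) ler_wpM2l //.
  apply: core => //.
  + exact: Xk (ltW us0).
  + exact: Xk.
  have -> : a * (expR (c + us) + k) - us * expR (c + us) = 0.
    rewrite -/xs /us mulrDr -stat; ring.
  by rewrite mulr0.
Qed.
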